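(* Let $E$ be a closed subset of $\mathbb{R}^n$ and let $k \ge 1$ be such that every two points $x, y \in E$ can be connected by a rectifiable path contained in $E$ whose length is at most $k\,|x-y|$. Let $A : \mathbb{R}^n \to \mathbb{R}$ be a fixed linear mapping and let $f : E \to \mathbb{R}$ be locally Lipschitz. Suppose that for every interval $I \subseteq \mathbb{R}$ and every locally Lipschitz map $p : I \to E$, the derivative of $t \mapsto f(p(t))$ equals $A(p'(t))$ for almost every $t \in I$. Then $f$ is the restriction to $E$ of an affine function on $\mathbb{R}^n$.
   Context: $|\cdot|$ denotes the Euclidean norm on $\mathbb{R}^n$. *)

(* Defs.v *)
From HB Require Import structures.
From mathcomp Require Import all_boot all_order all_algebra.
From mathcomp Require Import all_classical all_reals all_analysis.
Set Implicit Arguments. Unset Strict Implicit. Unset Printing Implicit Defensive.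
Import Order.TTheory GRing.Theory Num.Theory.
Import numFieldNormedType.Exports.
Local Open Scope classical_set_scope.
Local Open Scope ring_scope.

(* Euclidean norm |x| on R^n (the library norm on 'rV is the sup norm). *)
Definition enorm (R : realType) (n : nat) (x : 'rV[R]_n) : R :=
  Num.sqrt (\sum_(i < n) x ord0 i ^+ 2).

Definition path_length (R : realType) (n : nat) (g : R -> 'rV[R]_n) (a b : R)
  : \bar R :=
  ereal_sup [set v : \bar R | exists (m : nat) (t : nat -> R),
     [/\ t 0%N = a, t m = b, (forall i, (i < m)%N -> t i <= t i.+1) &
          v = (\sum_(i < m) enorm (g (t i.+1) - g (t i)))%:E] ].

Definition quasiconvex (R : realType) (n : nat) (E : set 'rV[R]_n) (k : R) :=
  forall x y, E x -> E y ->
    exists (a b : R) (g : R -> 'rV[R]_n),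
      [/\ a <= b, {within `[a, b], continuous g}, g a = x /\ g b = y,
          (forall t, a <= t <= b -> E (g t)) &
          (path_length g a b <= (k * enorm (x - y))%:E)%E].

Definition loc_lipschitz_on (R : realType) (n : nat) (E : set 'rV[R]_n)
  (f : 'rV[R]_n -> R) :=
  forall x, E x -> exists r L : R, 0 < r /\
    forall y z, E y -> E z -> enorm (y - x) < r -> enorm (z - x) < r ->
      `|f y - f z| <= L * enorm (y - z).

Definition loc_lipschitz_path (R : realType) (n : nat) (I : interval R)
  (p : R -> 'rV[R]_n) :=
  forall t, t \in I -> exists r L : R, 0 < r /\
    forall s u, s \in I -> u \in I -> `|s - t| < r -> `|u - t| < r ->
      enorm (p s - p u) <= L * `|s - u|.

(* Main.v *)
From HB Require Import structures.
From mathcomp Require Import all_boot all_order all_algebra.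
From mathcomp Require Import all_classical all_reals all_analysis.
From mathcomp Require Import ring lra measurable_realfun.
Require Import Defs.
Set Implicit Arguments. Unset Strict Implicit. Unset Printing Implicit Defensive.
Import Order.TTheory GRing.Theory Num.Theory.
Import numFieldNormedType.Exports.
Local Open Scope classical_set_scope.
Local Open Scope ring_scope.

Section P1.
Context {R : realType}.

Lemma real_ind (a b : R) (Q : R -> Prop) : a <= b -> Q a ->
  (forall t, a < t <= b -> (forall s, a <= s < t -> Q s) -> Q t) ->
  (forall t, a <= t < b -> Q t ->
     exists2 d, 0 < d & forall s, t < s < t + d -> s <= b -> Q s) ->
  Q b.
Proof.
move=> ab Qa Hcl Hst.
pose S := [set s | a <= s <= b /\ forall u, a <= u <= s -> Q u].
have Sa : S a.
  split; first by rewrite lexx ab.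
  by move=> u /andP[h1 h2]; have -> : u = a by apply/eqP; rewrite eq_le h1 h2.
have hs : has_sup S by split; [exists a | exists b => s [/andP[_ ->]]].
set c := sup S.
have ac : a <= c by apply: sup_upper_bound.
have cb : c <= b by apply: ge_sup; [exists a | move=> s [/andP[_ ->]]].
have Qlt : forall u, a <= u < c -> Q u.
  move=> u /andP[au uc].
  have [e Se] := sup_adherent (eps := c - u) (ltac:(by rewrite subr_gt0)) hs.
  rewrite -/c => lte; case: Se => _ HQ; apply: HQ.
  by rewrite au /=; apply: ltW; move: lte; rewrite opprB addrCA subrr addr0.
have Qc : forall u, a <= u <= c -> Q u.
  move=> u /andP[au uc].
  have [uc'|uc'] := ltP u c; first by apply: Qlt; rewrite au uc'.
  have -> : u = c by apply/eqP; rewrite eq_le uc uc'.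
  have [ac'|ac'] := ltP a c.
    by apply: Hcl; [rewrite ac' cb | exact: Qlt].
  by have -> : c = a by apply/eqP; rewrite eq_le ac'.
have [cb'|cb'] := ltP c b; last first.
  have -> : b = c by apply/eqP; rewrite eq_le cb' cb.
  by apply: Qc; rewrite ac lexx.
exfalso.
have [d d0 Hd] := Hst c (ltac:(by rewrite ac cb')) (Qc c (ltac:(by rewrite ac lexx))).
pose s := Num.min (c + d / 2) b.
have cs : c < s by rewrite /s lt_min cb' andbT ltrDl divr_gt0.
have Ss : S s.
  split; first by rewrite /s ge_min lexx orbT andbT (le_trans ac) // ltW.
  move=> u /andP[au us].
  have [uc|uc] := leP u c; first by apply: Qc; rewrite au uc.
  apply: Hd; last by rewrite (le_trans us) // /s ge_min lexx orbT.
  rewrite uc /= (le_lt_trans us) // /s gt_min ltrD2l ltr_pdivrMr //.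
  by rewrite ltr_pMr // ltr1n.
have := sup_upper_bound hs Ss; rewrite -/c => sc.
by move: (lt_le_trans cs sc); rewrite ltxx.
Qed.

End P1.

Section P2.
Context {R : realType}.

Definition locLip (a b : R) (h : R -> R) := forall t, a <= t <= b ->
  exists r L : R, 0 < r /\ forall s u, a <= s <= b -> a <= u <= b ->
    `|s - t| < r -> `|u - t| < r -> `|h s - h u| <= L * `|s - u|.

Lemma glue (a m' m s L1 L2 : R) (h : R -> R) : 0 <= L1 -> 0 <= L2 ->
  m' <= m -> m <= s ->
  (forall u v, a <= u <= m -> a <= v <= m -> `|h u - h v| <= L1 * `|u - v|) ->
  (forall u v, m' <= u <= s -> m' <= v <= s -> `|h u - h v| <= L2 * `|u - v|) ->
  forall u v, a <= u <= s -> a <= v <= s -> `|h u - h v| <= (L1 + L2) * `|u - v|.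
Proof.
move=> L10 L20 mm ms H1 H2.
have key : forall u v, u <= v -> a <= u <= s -> a <= v <= s ->
    `|h u - h v| <= (L1 + L2) * `|u - v|.
  move=> u v uv /andP[au us] /andP[av vs].
  have [vm|vm] := leP v m.
    apply: le_trans (H1 _ _ _ _) _; first by rewrite au (le_trans uv vm).
      by rewrite av vm.
    by rewrite ler_wpM2r // lerDl.
  have [mu|mu] := leP m' u.
    apply: le_trans (H2 _ _ _ _) _; first by rewrite mu us.
      by rewrite vs (le_trans mu uv).
    by rewrite ler_wpM2r // lerDr.
  have um : u <= m by rewrite ltW // (lt_le_trans mu mm).
  have h1 := H1 u m (ltac:(by rewrite au um)) (ltac:(by rewrite (le_trans au um) lexx)).
  have h2 := H2 m v (ltac:(by rewrite mm ms)) (ltac:(by rewrite vs (le_trans mm) // ltW)).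
  have e1 : `|u - m| = m - u by rewrite distrC ger0_norm // subr_ge0.
  have e2 : `|m - v| = v - m by rewrite distrC ger0_norm // subr_ge0 ltW.
  have e3 : `|u - v| = v - u by rewrite distrC ger0_norm // subr_ge0.
  rewrite e1 in h1; rewrite e2 in h2; rewrite e3.
  have : `|h u - h v| <= `|h u - h m| + `|h m - h v|.
    by rewrite (le_trans _ (ler_normD _ _)) // addrA subrK.
  move=> t; apply: (le_trans t); apply: (le_trans (lerD h1 h2)).
  have : L1 * (m - u) <= L1 * (v - u) by rewrite ler_wpM2l // lerD2r ltW.
  have : L2 * (v - m) <= L2 * (v - u) by rewrite ler_wpM2l // lerD2l lerN2.
  by move=> h3 h4; rewrite mulrDl; exact: lerD.
move=> u v Hu Hv; have [uv|uv] := leP u v; first exact: key.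
by rewrite distrC (distrC u); apply: key => //; apply: ltW.
Qed.

Lemma glob_lip (a b : R) h : a <= b -> locLip a b h ->
  exists L, 0 <= L /\ forall s u, a <= s <= b -> a <= u <= b ->
    `|h s - h u| <= L * `|s - u|.
Proof.
move=> ab Hl.
have Hl' : forall t, a <= t <= b -> exists r L : R, 0 < r /\ 0 <= L /\
    forall s u, a <= s <= b -> a <= u <= b ->
    `|s - t| < r -> `|u - t| < r -> `|h s - h u| <= L * `|s - u|.
  move=> t /Hl [r [L [r0 H]]]; exists r, `|L|; split => //; split => // s u *.
  by apply: (le_trans (H _ _ _ _ _ _)) => //; rewrite ler_wpM2r // ler_norm.
pose Q t := exists L, 0 <= L /\ forall s u, a <= s <= t -> a <= u <= t ->
    `|h s - h u| <= L * `|s - u|.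
suff : Q b by [].
apply: (@real_ind _ a b Q) => //.
- exists 0; split => // s u /andP[h1 h2] /andP[h3 h4].
  have -> : s = a by apply/eqP; rewrite eq_le h1 h2.
  have -> : u = a by apply/eqP; rewrite eq_le h3 h4.
  by rewrite !subrr normr0 mulr0.
- move=> t /andP[a_t tb] HQ.
  have [r [L2 [r0 [L20 H2]]]] := Hl' t (ltac:(by rewrite (ltW a_t) tb)).
  pose m := Num.max a (t - r / 2).
  have mt : m < t by rewrite /m gt_max a_t /= ltrBlDr ltrDl divr_gt0.
  have am : a <= m by rewrite /m le_max lexx.
  have [L1 [L10 H1]] := HQ m (ltac:(by rewrite am mt)).
  exists (L1 + L2); split; first by rewrite addr_ge0.
  apply: (glue L10 L20 (lexx m) (ltW mt) H1).
  move=> u v /andP[mu ut] /andP[mv vt]; apply: H2.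
  + by rewrite (le_trans am mu) (le_trans ut tb).
  + by rewrite (le_trans am mv) (le_trans vt tb).
  + rewrite distrC ger0_norm ?subr_ge0 //.
    have : t - r / 2 <= u by rewrite (le_trans _ mu) // /m le_max lexx orbT.
    have : r / 2 < r by rewrite ltr_pdivrMr // ltr_pMr // ltr1n.
    lra.
  + rewrite distrC ger0_norm ?subr_ge0 //.
    have : t - r / 2 <= v by rewrite (le_trans _ mv) // /m le_max lexx orbT.
    have : r / 2 < r by rewrite ltr_pdivrMr // ltr_pMr // ltr1n.
    lra.
- move=> t /andP[a_t tb] [L1 [L10 H1]].
  have [r [L2 [r0 [L20 H2]]]] := Hl' t (ltac:(by rewrite a_t (ltW tb))).
  exists r => // s /andP[ts str] sb.
  exists (L1 + L2); split; first by rewrite addr_ge0.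
  apply: (glue L10 L20 (lexx t) (ltW ts) H1).
  move=> u v /andP[mu ut] /andP[mv vt]; apply: H2.
  + by rewrite (le_trans a_t mu) (le_trans ut sb).
  + by rewrite (le_trans a_t mv) (le_trans vt sb).
  + by rewrite ger0_norm ?subr_ge0 //; lra.
  + by rewrite ger0_norm ?subr_ge0 //; lra.
Qed.

End P2.

Section P3.
Context {R : realType}.

Lemma deriv0_loc (h : R -> R) (t e : R) : 0 < e -> derivable h t 1 -> 'D_1 h t = 0 ->
  exists2 d, 0 < d & forall s, t < s < t + d -> `|h s - h t| <= e * (s - t).
Proof.
move=> e0 hd hD.
move: hd; rewrite /derivable -/(derive h t 1) hD.
move=> /cvgrPdist_lt /(_ e e0).
rewrite near_withinE => /nbhs_ballP [d d0 Hd].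
exists d => // s /andP[ts std].
have : ball (0:R) d (s - t) by rewrite /ball /= sub0r normrN ger0_norm ?subr_ge0; lra.
move=> /Hd /= H.
have st0 : s - t != 0 by rewrite subr_eq0 gt_eqF.
have := H st0; rewrite sub0r normrN /GRing.scale /= mulr1 subrK.
rewrite normrM normfV (@ger0_norm _ (s - t)) ?subr_ge0 ?(ltW ts) // mulrC ltr_pdivrMr ?subr_gt0 //.
by move=> /ltW.
Qed.

Lemma const_ae (a b : R) (h : R -> R) : a <= b -> locLip a b h ->
  {ae (@lebesgue_measure R), forall t, t \in `[a, b] ->
      derivable h t 1 /\ 'D_1 h t = 0} ->
  h b = h a.
Proof.
move=> ab hl [N [mN N0 HN]].
have [L [L0 HL]] := glob_lip ab hl.
suff H : forall eta, 0 < eta -> `|h b - h a| <= eta.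
  apply/eqP; rewrite -subr_eq0 -normr_le0; apply/ler_addgt0Pr => e e0.
  by rewrite add0r; exact: H.
move=> eta eta0.
have ba1 : 0 < b - a + 1 by rewrite ltr_wpDl // subr_ge0.
have L1 : 0 < L + 1 by rewrite ltr_wpDl.
pose eps := eta / (2 * (b - a + 1)).
pose del := eta / (2 * (L + 1)).
have eps0 : 0 < eps by rewrite divr_gt0 // mulr_gt0.
have del0 : 0 < del by rewrite divr_gt0 // mulr_gt0.
have Nfin : (lebesgue_measure N < +oo)%E by rewrite N0 ltry.
have [U [oU NU UN]] := lebesgue_regularity_outer mN Nfin del0.
have mU : measurable U by exact: open_measurable.
have Ulo : (lebesgue_measure U < del%:E)%E.
  rewrite -(setDUK NU).
  apply: le_lt_trans (measureU2 _ mN (measurableD mU mN)) _.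
  by rewrite -[X in (X + _)%E]/(lebesgue_measure N) N0 add0e.
pose M v := lebesgue_measure (U `&` [set` `[a, v]]).
have mUI v : measurable (U `&` [set` `[a, v]]) by apply: measurableI => //; exact: measurable_itv.
have MU v : (M v <= lebesgue_measure U)%E.
  by apply: le_measure; rewrite ?inE; [exact: mUI|exact: mU|exact: subIsetl].
have Mfin v : M v \is a fin_num.
  by rewrite ge0_fin_numE // (le_lt_trans (MU v)) // (lt_trans Ulo) // ltry.
pose m v := fine (M v).
have mE v : (m v)%:E = M v by rewrite fineK.
have m0 v : 0 <= m v by rewrite -lee_fin mE.
have mdel v : m v <= del.
  by rewrite -lee_fin mE ltW // (le_lt_trans (MU v)).
have mmono s t : s <= t -> m s <= m t.
  move=> st; rewrite -lee_fin !mE.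
  apply: le_measure; rewrite ?inE; [exact: mUI|exact: mUI|].
  move=> z [Uz /=]; rewrite !in_itv /= => /andP[az zs]; split => //=.
  by rewrite az (le_trans zs st).
pose Q t := `|h t - h a| <= eps * (t - a) + L * m t.
suff : Q b.
  move=> Qb; apply: (le_trans Qb).
  have e1 : eps * (b - a) <= eta / 2.
    have -> : eta / 2 = eps * (b - a + 1) by rewrite /eps; field; lra.
    by apply: ler_wpM2l; [exact: ltW | lra].
  have e2 : L * m b <= eta / 2.
    have -> : eta / 2 = (L + 1) * del by rewrite /del; field; lra.
    apply: le_trans (_ : L * del <= _).
      by rewrite ler_wpM2l.
    by apply: ler_wpM2r; [exact: ltW | lra].
  lra.
have Lip s u : a <= s <= b -> a <= u <= b -> `|h s - h u| <= L * `|s - u| by exact: HL.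
apply: (@real_ind _ a b Q) => //.
- by rewrite /Q subrr normr0 subrr mulr0 add0r mulr_ge0.
- move=> t /andP[a_t tb] IH; rewrite /Q.
  apply/ler_addgt0Pr => e e0.
  pose s := Num.max a (t - e / (L + 1)).
  have as_ : a <= s by rewrite /s le_max lexx.
  have st : s < t by rewrite /s gt_max a_t /= ltrBlDr ltrDl divr_gt0.
  have Qs := IH s (ltac:(by rewrite as_ st)).
  have ts : t - s <= e / (L + 1).
    have : t - e / (L + 1) <= s by rewrite /s le_max lexx orbT.
    lra.
  have h1 : `|h t - h s| <= e.
    apply: le_trans (Lip t s _ _) _; first by rewrite (ltW a_t) tb.
      by rewrite as_ (le_trans (ltW st) tb).
    rewrite ger0_norm ?subr_ge0 ?(ltW st) //.
    apply: le_trans (ler_wpM2l L0 ts) _.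
    rewrite (_ : L * (e / (L + 1)) = e * (L / (L + 1))); last by field; lra.
    apply: ler_piMr; first exact: ltW.
    by rewrite ler_pdivrMr // mul1r lerDl.
  have h2 : eps * (s - a) <= eps * (t - a) by apply: ler_wpM2l; [exact: ltW | lra].
  have h3 : L * m s <= L * m t by apply: ler_wpM2l => //; apply: mmono; exact: ltW.
  have := ler_distD (h s) (h t) (h a).
  move: Qs; rewrite /Q; lra.
- move=> t /andP[a_t tb] Qt.
  have [Ut|Ut] := pselect (U t).
  + have : nbhs t U by apply: open_nbhs_nbhs; split.
    move=> /nbhs_ballP [r r0 Hr].
    exists r => // s /andP[ts str] sb.
    have sub : `]t, s] `<=` U.
      move=> z /=; rewrite in_itv /= => /andP[tz zs]; apply: Hr.
      by rewrite /ball /= ler0_norm ?subr_le0 ?ltW //; lra.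
    have Ms : (M t + (s - t)%:E <= M s)%E.
      have -> : (s - t)%:E = lebesgue_measure [set` `]t, s]] :> \bar R.
        by rewrite lebesgue_measure_itv /= lte_fin ts -EFinD.
      have mI : measurable [set` `]t, s]] := measurable_itv _.
      have disj : (U `&` [set` `[a, t]]) `&` [set` `]t, s]] = set0.
        rewrite -subset0 => z [[_ /=]]; rewrite !in_itv /= => /andP[_ zt] /andP[tz _].
        by move: (le_lt_trans zt tz); rewrite ltxx.
      have sub2 : (U `&` [set` `[a, t]]) `|` [set` `]t, s]] `<=` U `&` [set` `[a, s]].
        move=> z [[Uz /=]|]; rewrite ?in_itv /=.
          by move=> /andP[az zt]; split => //=; rewrite ?in_itv /= az (le_trans zt (ltW ts)).
        move=> zz; split; first exact: sub.
        move: zz => /andP[tz zs]; rewrite in_itv /= -[z <= s]/(BRight z <= BRight s)%O zs andbT.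
        exact: le_trans a_t (ltW tz).
      apply: (@le_trans _ _ (lebesgue_measure ((U `&` [set` `[a, t]]) `|` [set` `]t, s]]))).
        have E1 := measureU lebesgue_measure (mUI t) mI disj.
        by rewrite /M -E1.
      apply: le_measure; rewrite ?inE; [exact: measurableU (mUI t) mI | exact: mUI | exact: sub2].
    have ms : m t + (s - t) <= m s by rewrite -lee_fin EFinD !mE.
    have h1 : `|h s - h t| <= L * (s - t).
      apply: le_trans (Lip s t _ _) _; first by rewrite sb (le_trans a_t (ltW ts)).
        by rewrite a_t (le_trans (ltW ts) sb).
      by rewrite ger0_norm // subr_ge0 ltW.
    have h2 : L * (s - t) <= L * (m s - m t) by apply: ler_wpM2l => //; lra.
    have h3 : eps * (t - a) <= eps * (s - a) by apply: ler_wpM2l; [exact: ltW | lra].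
    have := ler_distD (h t) (h s) (h a).
    move: Qt; rewrite /Q mulrBr; lra.
  + have Pt : t \in `[a, b] -> derivable h t 1 /\ 'D_1 h t = 0.
      apply: contrapT => nP; apply: Ut; apply: NU; apply: HN; exact: nP.
    have [hd hD] := Pt (ltac:(by rewrite in_itv /= a_t ltW)).
    have [d d0 Hd] := deriv0_loc eps0 hd hD.
    exists d => // s /andP[ts std] sb.
    have h1 := Hd s (ltac:(by rewrite ts std)).
    have h3 : L * m t <= L * m s by apply: ler_wpM2l => //; apply: mmono; exact: ltW.
    have := ler_distD (h t) (h s) (h a).
    move: Qt; rewrite /Q; lra.
Qed.

End P3.

Section P4.
Context {R : realType} {n : nat}.
Implicit Types x y : 'rV[R]_n.

Definition sq x := \sum_(i < n) x ord0 i ^+ 2.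
Definition dot x y := \sum_(i < n) x ord0 i * y ord0 i.

Lemma enormE x : enorm x = Num.sqrt (sq x). Proof. by []. Qed.
Lemma sq_ge0 x : 0 <= sq x. Proof. by apply: sumr_ge0 => i _; exact: sqr_ge0. Qed.
Lemma enorm_ge0 x : 0 <= enorm x. Proof. exact: sqrtr_ge0. Qed.
Lemma enorm_sq x : enorm x ^+ 2 = sq x. Proof. by rewrite sqr_sqrtr // sq_ge0. Qed.

Lemma sqN x : sq (- x) = sq x.
Proof. by apply: eq_bigr => i _; rewrite mxE sqrrN. Qed.
Lemma enormN x : enorm (- x) = enorm x. Proof. by rewrite /enorm -/(sq _) sqN. Qed.
Lemma enormB x y : enorm (x - y) = enorm (y - x).
Proof. by rewrite -enormN opprB. Qed.

Lemma sqD x y : sq (x + y) = sq x + 2 * dot x y + sq y.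
Proof.
rewrite /sq /dot mulr_sumr -!big_split /=; apply: eq_bigr => i _.
by rewrite mxE; ring.
Qed.

Lemma coord_le x i : `|x ord0 i| <= enorm x.
Proof.
rewrite -(sqrtr_sqr (x ord0 i)) ler_sqrt; last exact: sq_ge0.
by rewrite /sq (bigD1 i) //= lerDl; apply: sumr_ge0 => j _; exact: sqr_ge0.
Qed.


Lemma enorm_eq0 x : enorm x = 0 -> x = 0.
Proof.
move=> h; apply/rowP => i; rewrite mxE; apply/eqP; rewrite -normr_le0.
by rewrite -h -[i in x _ i]/i; have := coord_le x i; rewrite (ord1 ord0).
Qed.

Lemma CS x y : dot x y ^+ 2 <= sq x * sq y.
Proof.
have [y0|yp] := eqVneq (sq y) 0.
  have -> : dot x y = 0.
    apply: big1 => i _.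
    have := coord_le y i; rewrite /enorm -/(sq y) y0 sqrtr0 normr_le0 => /eqP ->.
    by rewrite mulr0.
  by rewrite expr0n /= mulr_ge0 // sq_ge0.
have ygt : 0 < sq y by rewrite lt_def yp sq_ge0.
pose lam := dot x y / sq y.
have H : 0 <= \sum_(i < n) (x ord0 i - lam * y ord0 i) ^+ 2.
  by apply: sumr_ge0 => i _; exact: sqr_ge0.
have E : \sum_(i < n) (x ord0 i - lam * y ord0 i) ^+ 2 =
    sq x - 2 * lam * dot x y + lam ^+ 2 * sq y.
  rewrite /sq /dot mulr_sumr mulr_sumr -sumrB -big_split /=.
  by apply: eq_bigr => i _; ring.
rewrite E /lam in H.
have : 0 <= sq x * sq y - dot x y ^+ 2.
  have -> : sq x * sq y - dot x y ^+ 2 = sq y *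
     (sq x - 2 * (dot x y / sq y) * dot x y + (dot x y / sq y) ^+ 2 * sq y).
    by field.
  by rewrite mulr_ge0 // ltW.
by rewrite subr_ge0.
Qed.

Lemma enormD x y : enorm (x + y) <= enorm x + enorm y.
Proof.
rewrite -(ler_pXn2r (_ : (0 < 2)%N)) ?nnegrE ?addr_ge0 ?enorm_ge0 //.
rewrite enorm_sq sqD sqrrD !enorm_sq lerD2r lerD2l.
rewrite -[X in _ <= X]mulr_natl; apply: ler_wpM2l => //.
apply: (le_trans (ler_norm _)).
rewrite -(sqrtr_sqr (dot x y)) /enorm -/(sq x) -/(sq y) -sqrtrM ?sq_ge0 //.
by rewrite ler_sqrt ?mulr_ge0 ?sq_ge0 // CS.
Qed.

Lemma enorm_tri x y z : enorm (x - z) <= enorm (x - y) + enorm (y - z).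
Proof. by rewrite (le_trans _ (enormD _ _)) // addrA subrK. Qed.


End P4.

Section P5.
Context {R : realType} {n : nat}.
Implicit Types x y : 'rV[R]_n.

Lemma coord_mx_norm x i : `|x ord0 i| <= `|x|.
Proof.
rewrite [X in _ <= X]mx_normrE.
by apply: (le_trans _ (le_bigmax _ _ (ord0, i))).
Qed.

Lemma enorm_le_mx x : enorm x <= n%:R * `|x|.
Proof.
rewrite -(ler_pXn2r (_ : (0 < 2)%N)) ?nnegrE ?mulr_ge0 ?enorm_ge0 //.
rewrite enorm_sq /sq.
have H : \sum_(i < n) x ord0 i ^+ 2 <= \sum_(i < n) `|x| ^+ 2.
  apply: ler_sum => i _.
  rewrite -real_normK ?num_real // ler_pXn2r ?nnegrE ?normr_ge0 //.
  exact: coord_mx_norm.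
apply: (le_trans H); rewrite sumr_const card_ord exprMn -[X in X <= _]mulr_natl.
apply: ler_wpM2r; first exact: sqr_ge0.
rewrite -natrX ler_nat expnS expn1.
by case: (posnP n) => [->|/leq_pmulr].
Qed.

Context (A : {linear 'rV[R]_n -> R^o}).

Definition CA := \sum_(i < n) `|A 'e_i|.
Lemma CA_ge0 : 0 <= CA. Proof. by apply: sumr_ge0 => i _. Qed.

Lemma A_bound x N : (forall i, `|x ord0 i| <= N) -> `|A x| <= CA * N.
Proof.
move=> HN; rewrite {1}(row_sum_delta x) linear_sum /=.
apply: (le_trans (ler_norm_sum _ _ _)).
rewrite /CA mulr_suml; apply: ler_sum => i _.
rewrite linearZ /= normrM mulrC ler_wpM2l //.
Qed.

Lemma A_enorm x : `|A x| <= CA * enorm x.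
Proof. by apply: A_bound => i; exact: coord_le. Qed.

Lemma A_mx x : `|A x| <= CA * `|x|.
Proof. by apply: A_bound => i; exact: coord_mx_norm. Qed.

Lemma A_cont : continuous A.
Proof.
move=> x; apply/(@cvgrPdist_lt _ _ _ _ (@nbhs_filter _ x)) => e e0.
have he : 0 < e / (CA + 1) by rewrite divr_gt0 // ltr_wpDl // CA_ge0.
near=> z.
have : ball x (e / (CA + 1)) z by near: z; exact: nbhsx_ballx.
rewrite -ball_normE /= => hz.
rewrite -linearB /=; apply: (le_lt_trans (A_mx _)).
have C1 : 0 < CA + 1 by rewrite ltr_wpDl // CA_ge0.
apply: (@le_lt_trans _ _ (CA * (e / (CA + 1)))).
  by apply: ler_wpM2l; [exact: CA_ge0 | exact: ltW].
rewrite (_ : CA * (e / (CA + 1)) = e * (CA / (CA + 1))); last by field; lra.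
by rewrite gtr_pMr // ltr_pdivrMr // mul1r ltrDl.
Unshelve. all: by end_near.
Qed.

Lemma A_der (p : R -> 'rV[R]_n) t : derivable p t 1 ->
  derivable (A \o p) t 1 /\ 'D_1 (A \o p) t = A ('D_1 p t).
Proof.
move=> hd.
have hq : (fun h => h^-1 *: ((p \o shift t) (h *: 1) - p t)) @ 0^' --> 'D_1 p t := hd.
have hA := continuous_cvg _ (@A_cont (derive p t 1)) hq.
have E : (fun h : R => h^-1 *: (((A \o p) \o shift t) (h *: 1) - (A \o p) t)) =
         (A \o (fun h => h^-1 *: ((p \o shift t) (h *: 1) - p t))).
  by apply/funext => h /=; rewrite [RHS]linearZ [in RHS]raddfB.
have hA' : (fun h : R => h^-1 *: (((A \o p) \o shift t) (h *: 1) - (A \o p) t)) @ 0^'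
   --> A ('D_1 p t) by rewrite E; exact: hA.
split; first exact: cvgP hA'.
exact: cvg_lim hA'.
Qed.

End P5.

Section P6.
Context {R : realType} {n : nat}.
Context (g : R -> 'rV[R]_n) (a b : R) (ab : a <= b)
  (gc : {within `[a, b], continuous g}) (PLb : (path_length g a b < +oo)%E).

Local Notation PL u := (path_length g a u).

Lemma enorm0 : enorm (0 : 'rV[R]_n) = 0.
Proof. by rewrite /enorm big1 ?sqrtr0 // => i _; rewrite mxE expr0n. Qed.

Lemma PL_ext t u : a <= t -> t <= u -> (PL t + (enorm (g u - g t))%:E <= PL u)%E.
Proof.
move=> a_t tu.
rewrite -leeBrDr //; apply: ge_ereal_sup => _ [m [tt [t0 tm tmono ->]]].
rewrite leeBrDr //.
pose tt' i := if (i <= m)%N then tt i else u.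
have H : [set v : \bar R | exists (m : nat) (t : nat -> R),
     [/\ t 0%N = a, t m = u, (forall i, (i < m)%N -> t i <= t i.+1) &
          v = (\sum_(i < m) enorm (g (t i.+1) - g (t i)))%:E] ]
   ((\sum_(i < m) enorm (g (tt i.+1) - g (tt i)) + enorm (g u - g t))%:E).
  exists m.+1, tt'; split.
  - by rewrite /tt' leq0n.
  - by rewrite /tt' ltnn.
  - move=> i; rewrite ltnS /tt' => im; rewrite im.
    case: (ltnP i m) => h; first exact: tmono.
    have -> : i = m by apply/eqP; rewrite eqn_leq im h.
    by rewrite tm.
  - rewrite big_ord_recr /= /tt' ltnn leqnn tm; congr ((_ + _)%:E).
    apply: eq_bigr => i _ /=.
    by rewrite ltn_ord ltnW // ltn_ord.
by rewrite -EFinD; apply: ereal_sup_ubound.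
Qed.

Lemma PL_a0 : (0 <= PL a)%E.
Proof.
apply: ereal_sup_ubound; exists 0%N, (fun _ => a); split => //.
by rewrite big_ord0.
Qed.

Lemma PL_fin t : a <= t <= b -> PL t \is a fin_num.
Proof.
move=> /andP[a_t tb].
have h1 := PL_ext (lexx a) a_t.
have h2 := PL_ext a_t tb.
rewrite ge0_fin_numE.
  apply: le_lt_trans PLb; apply: le_trans h2.
  by rewrite leeDl // lee_fin enorm_ge0.
apply: le_trans PL_a0 _; apply: le_trans h1.
by rewrite leeDl // lee_fin enorm_ge0.
Qed.

Definition sig t := fine (PL t) - fine (PL a).

Lemma sig_ext t u : a <= t -> t <= u -> u <= b -> sig t + enorm (g u - g t) <= sig u.
Proof.
move=> a_t tu ub.
have ft : PL t \is a fin_num by apply: PL_fin; rewrite a_t (le_trans tu ub).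
have fu : PL u \is a fin_num by apply: PL_fin; rewrite (le_trans a_t tu) ub.
have := PL_ext a_t tu; rewrite -(fineK ft) -(fineK fu) -EFinD lee_fin.
by rewrite /sig; lra.
Qed.

Lemma sig_a : sig a = 0. Proof. by rewrite /sig subrr. Qed.

Lemma sig_ge0 t : a <= t -> t <= b -> 0 <= sig t.
Proof.
move=> a_t tb; have := sig_ext (lexx a) a_t tb.
by rewrite sig_a add0r; apply: le_trans; exact: enorm_ge0.
Qed.

Lemma sig_mono t u : a <= t -> t <= u -> u <= b -> sig t <= sig u.
Proof.
move=> a_t tu ub; have := sig_ext a_t tu ub.
by apply: le_trans; rewrite lerDl enorm_ge0.
Qed.

Lemma gcont t : a <= t <= b -> forall e, 0 < e ->
  exists2 d, 0 < d & forall u, a <= u <= b -> `|u - t| < d -> enorm (g u - g t) < e.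
Proof.
move=> tab e e0.
have : g @ within [set` `[a, b]] (nbhs t) --> g t.
  by move/subspace_continuousP : gc; apply; rewrite /= in_itv /=.
have n1 : 0 < n%:R + 1 :> R by rewrite ltr_wpDl.
have e' : 0 < e / (n%:R + 1) by rewrite divr_gt0.
move=> /cvgrPdist_lt /(_ _ e').
rewrite near_withinE => /nbhs_ballP [d d0 Hd].
exists d => // u uab ut.
have : ball t d u by rewrite /ball /= distrC.
move=> /Hd /(_ (ltac:(by rewrite /= in_itv /=))) H.
rewrite enormB; apply: le_lt_trans (enorm_le_mx _) _.
apply: (@le_lt_trans _ _ (n%:R * (e / (n%:R + 1)))).
  by apply: ler_wpM2l => //; exact: ltW.
rewrite (_ : n%:R * (e / (n%:R + 1)) = e * (n%:R / (n%:R + 1))); last by field; lra.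
by rewrite gtr_pMr // ltr_pdivrMr // mul1r ltrDl.
Qed.

Lemma LimL t1 t2 c : a <= t1 -> t1 <= t2 -> t2 <= b -> 0 <= c ->
  (forall u v, t1 < u -> u <= v -> v < t2 -> enorm (g v - g u) <= c) ->
  enorm (g t2 - g t1) <= c.
Proof.
move=> a1 t12 b2 c0 H.
have [e12|lt12] := eqVneq t1 t2; first by rewrite e12 subrr enorm0.
have l12 : t1 < t2 by rewrite lt_def eq_sym lt12 t12.
apply/ler_addgt0Pr => e e0.
have e2 : 0 < e / 2 by rewrite divr_gt0.
have [d1 d10 H1] := @gcont t1 (ltac:(by rewrite a1 (le_trans t12 b2))) _ e2.
have [d2 d20 H2] := @gcont t2 (ltac:(by rewrite (le_trans a1 t12) b2)) _ e2.
pose d := Num.min (Num.min d1 d2) ((t2 - t1) / 2).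
have d0 : 0 < d by rewrite /d !lt_min d10 d20 /= divr_gt0 // subr_gt0.
have dd1 : d <= d1 by rewrite /d !ge_min lexx.
have dd2 : d <= d2 by rewrite /d !ge_min lexx orbT.
have dd3 : d <= (t2 - t1) / 2 by rewrite /d !ge_min lexx orbT.
pose u := t1 + d / 2.
pose v := t2 - d / 2.
have hd2 : 0 < d / 2 by rewrite divr_gt0.
have hd3 : d / 2 < d by rewrite ltr_pdivrMr // ltr_pMr // ltr1n.
have hu : t1 < u by rewrite /u ltrDl.
have hv : v < t2 by rewrite /v ltrBlDr ltrDl.
have huv : u <= v.
  have : d <= (t2 - t1) / 2 := dd3.
  rewrite /u /v; move: hd2 => _; lra.
have Hc := H u v hu huv hv.
have Hu : enorm (g u - g t1) < e / 2.
  apply: H1; first by rewrite (le_trans a1 (ltW hu)) (le_trans huv) // (le_trans (ltW hv)).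
  by rewrite /u addrAC subrr add0r ger0_norm ?ltW //; apply: lt_le_trans dd1.
have Hv : enorm (g v - g t2) < e / 2.
  apply: H2; last by rewrite /v addrAC subrr add0r normrN ger0_norm ?ltW //; apply: lt_le_trans dd2.
  by rewrite (le_trans a1 (le_trans (ltW hu) huv)) (le_trans (ltW hv)).
have := enorm_tri (g t2) (g v) (g t1).
have := enorm_tri (g v) (g u) (g t1).
rewrite (enormB (g t2) (g v)).
lra.
Qed.

Definition Srr r := [set t | a <= t <= b /\ sig t <= r].
Definition T r := sup (Srr r).

Lemma Srr_a r : 0 <= r -> Srr r a.
Proof. by move=> r0; split; [rewrite lexx ab | rewrite sig_a]. Qed.

Lemma Srr_sup r : 0 <= r -> has_sup (Srr r).
Proof.
move=> r0; split; first by exists a; exact: Srr_a.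
by exists b => t [/andP[_ ->]].
Qed.

Lemma T_in r : 0 <= r -> a <= T r <= b.
Proof.
move=> r0; rewrite (sup_upper_bound (Srr_sup r0) (Srr_a r0)) /=.
by apply: ge_sup; [exists a; exact: Srr_a | move=> t [/andP[_ ->]]].
Qed.

Lemma T_key r1 r2 : 0 <= r1 -> r1 <= r2 -> enorm (g (T r2) - g (T r1)) <= r2 - r1.
Proof.
move=> r10 r12.
have r20 : 0 <= r2 := le_trans r10 r12.
have t12 : T r1 <= T r2.
  apply: ge_sup; first by exists a; exact: Srr_a.
  move=> t [tab st]; apply: (sup_upper_bound (Srr_sup r20)); split => //.
  exact: le_trans st r12.
have /andP[a1 _] := T_in r10.
have /andP[_ b2] := T_in r20.
apply: LimL => //; first by rewrite subr_ge0.
move=> u v hu huv hv.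
have ua : a <= u by rewrite (le_trans a1) // ltW.
have vb : v <= b by rewrite (le_trans _ b2) // ltW.
have su : r1 < sig u.
  rewrite ltNge; apply/negP => su.
  have Su : Srr r1 u by split; [rewrite ua (le_trans huv vb) | exact: su].
  have h := sup_upper_bound (Srr_sup r10) Su.
  by move: (lt_le_trans hu h); rewrite ltxx.
have [w [/andP[aw wb] sw] vw] := sup_adherent (eps := T r2 - v) (ltac:(by rewrite subr_gt0)) (Srr_sup r20).
have vw' : v < w by move: vw; rewrite -/(T r2); lra.
have svw := sig_mono (le_trans ua huv) (ltW vw') wb.
have := sig_ext ua huv vb.
lra.
Qed.

Lemma T_ell : T (sig b) = b.
Proof.
have s0 : 0 <= sig b := sig_ge0 ab (lexx b).
have /andP[_ tb] := T_in s0.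
apply/eqP; rewrite eq_le tb /=.
apply: (sup_upper_bound (Srr_sup s0)); split; [by rewrite ab lexx | exact: lexx].
Qed.

Lemma T0 : g (T 0) = g a.
Proof.
have /andP[_ b0] := T_in (lexx 0).
have /andP[a0 _] := T_in (lexx 0).
have H : enorm (g (T 0) - g a) <= 0.
  apply: LimL => // u v hu huv hv.
  have ua : a <= u by rewrite ltW.
  have vb : v <= b by rewrite (le_trans _ b0) // ltW.
  have [w [/andP[aw wb] sw] vw] := sup_adherent (eps := T 0 - v) (ltac:(by rewrite subr_gt0)) (Srr_sup (lexx 0)).
  have vw' : v < w by move: vw; rewrite -/(T 0); lra.
  have svw := sig_mono (le_trans ua huv) (ltW vw') wb.
  have := sig_ext ua huv vb.
  have := sig_ge0 ua (le_trans huv vb).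
  lra.
apply/eqP; rewrite -subr_eq0; apply/eqP/enorm_eq0.
by apply/eqP; rewrite eq_le H enorm_ge0.
Qed.

Lemma reparam : exists (l : R) (p : R -> 'rV[R]_n), [/\ 0 <= l, p 0 = g a, p l = g b,
  (forall r, 0 <= r -> exists2 t, a <= t <= b & p r = g t) &
  (forall r1 r2, 0 <= r1 -> 0 <= r2 -> enorm (p r1 - p r2) <= `|r1 - r2|)].
Proof.
exists (sig b), (fun r => g (T r)); split.
- exact: sig_ge0 ab (lexx b).
- exact: T0.
- by rewrite T_ell.
- by move=> r r0; exists (T r) => //; exact: T_in.
- move=> r1 r2 r10 r20.
  case: (lerP r1 r2) => h.
    have K := T_key r10 h.
    by rewrite enormB.
  exact: T_key r20 (ltW h).
Qed.

End P6.

Unset Implicit Arguments.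

Theorem mainTheorem3 (R : realType) (n : nat) (E : set 'rV[R]_n) (k : R)
  (A : {linear 'rV[R]_n -> R^o}) (f : 'rV[R]_n -> R) :
  closed E -> 1 <= k -> quasiconvex E k ->
  loc_lipschitz_on E f ->
  (forall (I : interval R) (p : R -> 'rV[R]_n),
     (forall t, t \in I -> E (p t)) -> loc_lipschitz_path I p ->
     {ae (@lebesgue_measure R), forall t, t \in I ->
        [/\ derivable p t 1, derivable (f \o p) t 1 &
            'D_1 (f \o p) t = A ('D_1 p t)]}) ->
  exists (B : {linear 'rV[R]_n -> R^o}) (c : R),
    forall x, E x -> f x = B x + c.
Proof.
move=> cE k1 qc fl Hyp.
have claim : forall x y, E x -> E y -> f y - A y = f x - A x.
  move=> x y Ex Ey.
  have [a [b [g [ab gc [ga gb] gE PLle]]]] := qc x y Ex Ey.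
  have PLb : (path_length g a b < +oo)%E by apply: le_lt_trans PLle _; rewrite ltry.
  have [l [p [l0 p0 pl pin plip]]] := @reparam R n g a b ab gc PLb.
  have Ep : forall t, 0 <= t -> E (p t).
    by move=> t t0; have [t' t'ab ->] := pin t t0; apply: gE.
  pose h := (f \o p) - (A \o p).
  have hE t : h t = f (p t) - A (p t) by [].
  have : h l = h 0.
    apply: const_ae => //.
    - move=> t /andP[t0 tl].
      have [r [L [r0 HL]]] := fl (p t) (Ep t t0).
      exists r, (`|L| + CA A); split => // s u /andP[s0 sl] /andP[u0 ul] st ut.
      have es := plip s t s0 t0.
      have eu := plip u t u0 t0.
      have esu := plip s u s0 u0.
      have H1 := HL (p s) (p u) (Ep s s0) (Ep u u0) (le_lt_trans es st) (le_lt_trans eu ut).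
      have H2 := A_enorm A (p s - p u).
      rewrite !hE.
      have -> : f (p s) - A (p s) - (f (p u) - A (p u)) =
                (f (p s) - f (p u)) - A (p s - p u) by rewrite linearB /=; ring.
      apply: (le_trans (ler_normB _ _)).
      have H3 : L * enorm (p s - p u) <= `|L| * `|s - u|.
        apply: (le_trans (ler_wpM2r (enorm_ge0 _) (ler_norm L))).
        by apply: ler_wpM2l.
      have H4 : CA A * enorm (p s - p u) <= CA A * `|s - u|.
        by apply: ler_wpM2l => //; exact: CA_ge0.
      rewrite mulrDl.
      apply: lerD; first exact: le_trans H1 H3.
      exact: le_trans H2 H4.
    - have Ein : forall t, t \in `[0, l] -> E (p t).
        by move=> t; rewrite in_itv /= => /andP[t0 _]; exact: Ep.
      have Lp : loc_lipschitz_path `[0, l] p.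
        move=> t _; exists 1, 1; split => // s u.
        rewrite !in_itv /= => /andP[s0 _] /andP[u0 _] _ _.
        by rewrite mul1r; exact: plip.
      case: (Hyp _ p Ein Lp) => N [mN N0 HN].
      exists N; split => // t /= nQ; apply: HN => /= HP; apply: nQ => tI.
      have [dp dfp Dfp] := HP tI.
      have [dA DA] := A_der A dp.
      split; first exact: derivableB.
      by rewrite deriveB // DA Dfp subrr.
  by rewrite !hE pl p0 ga gb.
have [[x0 Ex0]|nE] := pselect (exists x, E x).
  exists A, (f x0 - A x0) => x Ex.
  by rewrite -(claim x0 x Ex0 Ex) addrCA subrr addr0.
by exists A, 0 => x Ex; exfalso; apply: nE; exists x.
Qed.
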